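(* Let $G$ be a countable group with a right-invariant metric $d$ whose integer balls $B_k=\{g:d(g,e)\le k\}$ are finite, and suppose $(G,d)$ has the Besicovitch covering property with constant $C$. For $a\in\ell^1(G)$ and $k\in\mathbb{N}$ let $s_ka(h)=\sum_{g\in B_k}a(gh)$. Let $k\in\mathbb{N}$, $\epsilon>0$, $a,b\in\ell^1(G)$ with $b\ge0$, and set $H=\bigcup_{i=1}^kH^{(i)}$ where $H^{(i)}=\{h\in G:s_ia(h)>\epsilon\,s_ib(h)\}$. Then $\|a\|_1\ge\epsilon C^{-1}\sum_{h\in H}b(h)$.
   Context: Besicovitch covering property with constant $C$: for every finite $E$ and every collection $\mathcal{U}=\{B_{r(x)}(x):x\in E\}$ of closed balls centred in $E$ there is $\mathcal{V}\subseteq\mathcal{U}$ with $\mathbf{1}_E\le\sum_{U\in\mathcal{V}}\mathbf{1}_U\le C$. *)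

(* Defs.v *)
From Stdlib Require Import Reals List.
Import ListNotations.
Open Scope R_scope.

Definition lsum {G : Type} (f : G -> R) (l : list G) : R :=
  fold_right Rplus 0 (map f l).

Definition is_group {G : Type} (mul : G -> G -> G) (inv : G -> G) (e : G) : Prop :=
  (forall x y z, mul (mul x y) z = mul x (mul y z)) /\
  (forall x, mul e x = x) /\ (forall x, mul x e = x) /\
  (forall x, mul (inv x) x = e) /\ (forall x, mul x (inv x) = e).

Definition countable (G : Type) : Prop :=
  exists f : G -> nat, forall x y, f x = f y -> x = y.

Definition is_metric {G : Type} (d : G -> G -> R) : Prop :=
  (forall x y, 0 <= d x y) /\ (forall x y, d x y = 0 <-> x = y) /\
  (forall x y, d x y = d y x) /\ (forall x y z, d x z <= d x y + d y z).

Definition right_invariant {G : Type} (mul : G -> G -> G) (d : G -> G -> R) : Prop :=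
  forall g g' h, d (mul g h) (mul g' h) = d g g'.

Definition ball_list {G : Type} (d : G -> G -> R) (e : G) (k : nat) (l : list G) : Prop :=
  NoDup l /\ forall g, In g l <-> d g e <= INR k.

Definition multiplicity {G : Type} (d : G -> G -> R) (r : G -> R) (V : list G) (y : G) : nat :=
  length (filter (fun x => if Rle_dec (d y x) (r x) then true else false) V).

(* Besicovitch covering property with constant C: for every finite set E
   (a list) and radii r (positive) there is a subfamily, indexed by a set of
   centres V ⊆ E, covering E with multiplicity at most C. *)
Definition besicovitch {G : Type} (d : G -> G -> R) (C : R) : Prop :=
  forall (E : list G) (r : G -> R), (forall x, In x E -> 0 < r x) ->
    exists V : list G, NoDup V /\ incl V E /\
      (forall y, In y E -> exists x, In x V /\ d y x <= r x) /\
      (forall y, INR (multiplicity d r V y) <= C).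

(* a ∈ ℓ^1(G): finite partial sums of |a| are bounded. *)
Definition finite_sums {G : Type} (f : G -> R) (s : R) : Prop :=
  exists l : list G, NoDup l /\ s = lsum f l.

Definition l1 {G : Type} (a : G -> R) : Prop :=
  bound (finite_sums (fun g => Rabs (a g))).

(* s_k a (h) = sum_{g in B_k} a(g h), computed along an enumeration l of B_k. *)
Definition sk {G : Type} (mul : G -> G -> G) (l : list G) (a : G -> R) (h : G) : R :=
  lsum (fun g => a (mul g h)) l.

Definition in_Hi {G : Type} (mul : G -> G -> G) (d : G -> G -> R) (e : G)
  (eps : R) (a b : G -> R) (i : nat) (h : G) : Prop :=
  exists l, ball_list d e i l /\ sk mul l a h > eps * sk mul l b h.

Definition in_H {G : Type} (mul : G -> G -> G) (d : G -> G -> R) (e : G)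
  (eps : R) (a b : G -> R) (k : nat) (h : G) : Prop :=
  exists i, (1 <= i <= k)%nat /\ in_Hi mul d e eps a b i h.

(* Main.v *)
Require Import Defs.
From Stdlib Require Import Reals List.
From Stdlib Require Import Lra Lia Permutation Classical ClassicalEpsilon FinFun.
Import ListNotations.
Open Scope R_scope.

Section Aux.
Context {G : Type}.

Lemma lsum_ext (f g : G -> R) l : (forall y, In y l -> f y = g y) -> lsum f l = lsum g l.
Proof. induction l; simpl; intros H; unfold lsum in *; simpl; auto.
  rewrite H by auto. rewrite IHl; auto. Qed.

Lemma lsum_plus (f g : G -> R) l : lsum (fun y => f y + g y) l = lsum f l + lsum g l.
Proof. induction l; unfold lsum in *; simpl; [lra|]. rewrite IHl; lra. Qed.

Lemma lsum_scal (c : R) (f : G -> R) l : lsum (fun y => c * f y) l = c * lsum f l.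
Proof. induction l; unfold lsum in *; simpl; [lra|]. rewrite IHl; lra. Qed.

Lemma lsum_le (f g : G -> R) l : (forall y, In y l -> f y <= g y) -> lsum f l <= lsum g l.
Proof. induction l; unfold lsum in *; simpl; intros H; [lra|].
  assert (H1 := H a (or_introl eq_refl)). assert (IH := IHl (fun y h => H y (or_intror h))). lra.
Qed.

Lemma lsum_nonneg (f : G -> R) l : (forall y, In y l -> 0 <= f y) -> 0 <= lsum f l.
Proof. intros H. replace 0 with (lsum (fun _ => 0) l).
  apply lsum_le; auto. clear H. induction l; unfold lsum in *; simpl; auto. rewrite IHl; lra. Qed.

Lemma lsum_perm (f : G -> R) l l' : Permutation l l' -> lsum f l = lsum f l'.
Proof. induction 1; unfold lsum in *; simpl; try lra. Qed.

Lemma lsum_filter (f : G -> R) (p : G -> bool) l :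
  lsum f (filter p l) = lsum (fun y => if p y then f y else 0) l.
Proof. induction l; unfold lsum in *; simpl; auto. destruct (p a); simpl; rewrite IHl; lra. Qed.

Lemma lsum_map {H : Type} (f : G -> R) (g : H -> G) l : lsum f (map g l) = lsum (fun x => f (g x)) l.
Proof. unfold lsum. rewrite map_map. reflexivity. Qed.

Lemma lsum_sub (eqd : forall x y : G, {x = y} + {x <> y}) (f : G -> R) S U :
  NoDup S -> NoDup U -> incl S U -> (forall y, In y U -> 0 <= f y) -> lsum f S <= lsum f U.
Proof. intros HS HU Hi Hf.
  set (p := fun y => if in_dec eqd y S then true else false).
  assert (Permutation S (filter p U)).
  { apply NoDup_Permutation; auto. apply NoDup_filter; auto.
    intro y; rewrite filter_In; unfold p; split.
    - intros; split; auto. destruct (in_dec eqd y S); tauto.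
    - intros [_ H]. destruct (in_dec eqd y S); congruence. }
  rewrite (lsum_perm _ _ _ H), lsum_filter. apply lsum_le. intros y Hy.
  destruct (p y); auto; lra.
Qed.

Lemma exch (f : G -> R) (V U : list G) (L : G -> list G) (p : G -> G -> bool) :
  NoDup U -> (forall x, In x V -> NoDup (L x) /\ forall y, In y (L x) <-> In y U /\ p x y = true) ->
  lsum (fun x => lsum f (L x)) V = lsum (fun y => f y * INR (length (filter (fun x => p x y) V))) U.
Proof. intros HU. induction V as [|x V IH]; intros H.
  - unfold lsum at 1; simpl. rewrite (lsum_ext _ (fun y => 0 * f y)) by (intros; simpl; ring).
    rewrite lsum_scal; lra.
  - unfold lsum at 1; simpl. fold (lsum (fun x => lsum f (L x)) V).
    rewrite IH by (intros; apply H; simpl; auto).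
    destruct (H x (or_introl eq_refl)) as [HN HL].
    assert (Permutation (L x) (filter (p x) U)).
    { apply NoDup_Permutation; auto. apply NoDup_filter; auto.
      intro y; rewrite filter_In; auto. }
    rewrite (lsum_perm _ _ _ H0), lsum_filter, <- lsum_plus. apply lsum_ext.
    intros y _. simpl. destruct (p x y); simpl length; try rewrite S_INR; ring.
Qed.
Lemma len_pos (q : G -> bool) V x : In x V -> q x = true -> 1 <= INR (length (filter q V)).
Proof. intros Hx Hq. assert (In x (filter q V)) by (apply filter_In; auto).
  destruct (filter q V); [contradiction|]. simpl length. rewrite S_INR.
  pose proof (pos_INR (length l)). lra. Qed.
End Aux.

Theorem lemma6 (G : Type) (mul : G -> G -> G) (inv : G -> G) (e : G)
  (d : G -> G -> R) (C : R)
  (hgrp : is_group mul inv e) (hcount : countable G)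
  (hmet : is_metric d) (hrinv : right_invariant mul d)
  (hballs : forall k : nat, exists l, ball_list d e k l)
  (hbes : besicovitch d C)
  (k : nat) (eps : R) (a b : G -> R)
  (heps : 0 < eps) (ha : l1 a) (hb : l1 b) (hbpos : forall g, 0 <= b g)
  (norm_a : R) (hnorm : is_lub (finite_sums (fun g => Rabs (a g))) norm_a) :
  forall S : list G, NoDup S -> (forall h, In h S -> in_H mul d e eps a b k h) ->
    eps * / C * lsum b S <= norm_a.
Proof.
  intros S HS HH.
  destruct hcount as [fc Hfc].
  assert (eqd : forall x y : G, {x = y} + {x <> y}).
  { intros x y. destruct (Nat.eq_dec (fc x) (fc y)) as [E|E].
    left; auto. right; intro; subst; auto. }
  destruct hgrp as [Hass [Hel [Her [Hil Hir]]]].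
  assert (HC : 0 < C).
  { destruct (hbes [e] (fun _ => 1)) as [V [_ [_ [Hcov Hm]]]]. intros; lra.
    destruct (Hcov e (or_introl eq_refl)) as [x [Hx Hd]].
    specialize (Hm e). unfold multiplicity in Hm.
    assert (1 <= INR (length (filter (fun x => if Rle_dec (d e x) 1 then true else false) V))).
    { apply len_pos with x; auto. destruct (Rle_dec (d e x) 1); auto. }
    lra. }
  assert (Hc : forall h, exists p : nat * list G, In h S ->
     ((1 <= fst p)%nat /\ ball_list d e (fst p) (snd p) /\ sk mul (snd p) a h > eps * sk mul (snd p) b h)).
  { intro h. destruct (classic (In h S)) as [Hin|Hin].
    - destruct (HH h Hin) as [i [[Hi _] [l [Hl Hsk]]]]. exists (i, l); simpl; auto.
    - exists (0%nat, nil); tauto. }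
  set (c := fun h => proj1_sig (constructive_indefinite_description _ (Hc h))).
  assert (Hcp : forall h, In h S ->
     ((1 <= fst (c h))%nat /\ ball_list d e (fst (c h)) (snd (c h)) /\
       sk mul (snd (c h)) a h > eps * sk mul (snd (c h)) b h)).
  { intro h. unfold c. destruct (constructive_indefinite_description _ (Hc h)); simpl; auto. }
  set (r := fun h => INR (fst (c h))).
  destruct (hbes S r) as [V [HV [HVS [Hcov Hm]]]].
  { intros x Hx. destruct (Hcp x Hx) as [H1 _]. unfold r. apply lt_0_INR. lia. }
  set (L := fun x => map (fun g => mul g x) (snd (c x))).
  assert (HL : forall x, In x S -> NoDup (L x) /\ forall y, In y (L x) <-> d y x <= r x).
  { intros x Hx. destruct (Hcp x Hx) as [_ [[Hn Hb] _]]. split.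
    - apply Injective_map_NoDup; auto. intros g g' E.
      rewrite <- (Her g), <- (Her g'), <- (Hir x), <- !Hass, E. reflexivity.
    - intro y. unfold L, r. rewrite in_map_iff. split.
      + intros [g [E Hg]]. subst y. apply Hb in Hg.
        rewrite <- (Hel x) at 2. rewrite hrinv. auto.
      + intros Hd. exists (mul y (inv x)). split.
        * rewrite Hass, Hil, Her; auto.
        * apply Hb. rewrite <- (hrinv _ _ x), Hass, Hil, Her, Hel. auto. }
  set (U := nodup eqd (concat (map L V))).
  assert (HU : NoDup U) by apply NoDup_nodup.
  assert (HUi : forall y, In y U <-> exists x, In x V /\ In y (L x)).
  { intro y. unfold U. rewrite nodup_In, in_concat. split.
    - intros [l [Hl Hy]]. apply in_map_iff in Hl. destruct Hl as [x [<- Hx]]. eauto.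
    - intros [x [Hx Hy]]. exists (L x). split; auto. apply in_map; auto. }
  set (p := fun x y => if Rle_dec (d y x) (r x) then true else false).
  assert (Hex : forall f, lsum (fun x => lsum f (L x)) V =
     lsum (fun y => f y * INR (multiplicity d r V y)) U).
  { intro f. apply (exch f V U L p HU). intros x Hx. assert (HxS := HVS x Hx).
    destruct (HL x HxS) as [Hn Hi]. split; auto. intro y. unfold p. split.
    - intros Hy. split. apply HUi; eauto. destruct (Rle_dec (d y x) (r x)); auto.
      apply Hi in Hy; contradiction.
    - intros [_ Hp]. apply Hi. destruct (Rle_dec (d y x) (r x)); auto; discriminate. }
  assert (H1 : lsum b S <= lsum (fun y => b y * INR (multiplicity d r V y)) U).
  { apply Rle_trans with (lsum (fun y => b y * INR (multiplicity d r V y)) S).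
    - apply lsum_le. intros y Hy. destruct (Hcov y Hy) as [x [Hx Hd]].
      assert (1 <= INR (multiplicity d r V y)).
      { unfold multiplicity. apply len_pos with x; auto.
        destruct (Rle_dec (d y x) (r x)); auto. }
      pose proof (hbpos y). nra.
    - apply lsum_sub; auto.
      + intros y Hy. destruct (Hcov y Hy) as [x [Hx Hd]]. apply HUi. exists x; split; auto.
        apply (HL x (HVS x Hx)); auto.
      + intros y _. pose proof (hbpos y). pose proof (pos_INR (multiplicity d r V y)). nra. }
  assert (H2 : eps * lsum (fun x => lsum b (L x)) V <= lsum (fun x => lsum (fun g => Rabs (a g)) (L x)) V).
  { rewrite <- lsum_scal. apply lsum_le. intros x Hx.
    destruct (Hcp x (HVS x Hx)) as [_ [_ Hsk]]. unfold sk in Hsk. unfold L. rewrite !lsum_map.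
    apply Rle_trans with (lsum (fun g => a (mul g x)) (snd (c x))). lra.
    apply lsum_le. intros. apply Rle_abs. }
  rewrite !Hex in H2.
  assert (H3 : lsum (fun y => Rabs (a y) * INR (multiplicity d r V y)) U <= C * norm_a).
  { apply Rle_trans with (lsum (fun y => C * Rabs (a y)) U).
    - apply lsum_le. intros y _. specialize (Hm y). pose proof (Rabs_pos (a y)). nra.
    - rewrite lsum_scal. apply Rmult_le_compat_l; [lra|]. apply hnorm. exists U; auto. }
  assert (eps * lsum b S <= C * norm_a) by nra.
  apply Rmult_le_reg_l with C; auto.
  replace (C * (eps * / C * lsum b S)) with (eps * lsum b S) by (field; lra). lra.
Qed.
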